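(* Let $X_1,\dots,X_n$ be independent random variables with $X_i\sim\mathrm{Geo}(p_i)$, where $0<p_1\le p_2\le\dots\le p_n<1$, let $X=\sum_{i=1}^n X_i$ and $\mu=\mathbb{E}[X]=\sum_{i=1}^n 1/p_i$. Then for every $t\ge 0$, $$\Pr\big(X>3(\mu+t)\big)\le e^{-\frac{p_1}{2}\mu-p_1 t}.$$
   Context: $\mathrm{Geo}(p)$ denotes the geometric distribution on $\{1,2,\dots\}$ with $\Pr(X=k)=(1-p)^{k-1}p$. *)

(* Defs.v *)
From HB Require Import structures.
From mathcomp Require Import all_boot all_order all_algebra.
From mathcomp Require Import all_classical all_reals all_analysis.
Set Implicit Arguments. Unset Strict Implicit. Unset Printing Implicit Defensive.
Import Order.TTheory GRing.Theory Num.Theory.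
Local Open Scope classical_set_scope.
Local Open Scope ring_scope.

(* Mutual independence of finitely many real random variables:
   P(X_0 in B_0, ..., X_{n-1} in B_{n-1}) = prod_i P(X_i in B_i)
   for all measurable B_i (taking B_i = setT covers subfamilies). *)
Definition mutually_independent_RV (d : measure_display) (T : measurableType d)
  (R : realType) (P : probability T R) (n : nat) (X : 'I_n -> {RV P >-> R}) : Prop :=
  forall B : 'I_n -> set R, (forall i, measurable (B i)) ->
    P (\bigcap_(i in [set: 'I_n]) (X i @^-1` B i)) =
    (\big[*%E/1%E]_(i < n) P (X i @^-1` B i))%E.

Definition is_geometric (d : measure_display) (T : measurableType d)
  (R : realType) (P : probability T R) (Y : {RV P >-> R}) (q : R) : Prop :=
  forall k : nat, P [set w | Y w = k.+1%:R] = (((1 - q) ^+ k) * q)%:E.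

(* Main.v *)
Require Import Defs.
From HB Require Import structures.
From mathcomp Require Import all_boot all_order all_algebra.
From mathcomp Require Import all_classical all_reals all_analysis.
From mathcomp Require Import ring lra.
Import Order.TTheory GRing.Theory Num.Theory numFieldNormedType.Exports.
Local Open Scope classical_set_scope.
Local Open Scope ring_scope.

Lemma PG (d : measure_display) (T : measurableType d) (R : realType)
  (P : probability T R) (Y : {RV P >-> R}) (q : R) (K : nat) :
  is_geometric Y q ->
  P (\big[setU/set0]_(j < K) (Y @^-1` [set j.+1%:R])) = (1 - (1 - q) ^+ K)%:E.
Proof.
move=> hg.
rewrite measure_bigsetU_ord; last 2 first.
- by move=> j; apply: measurable_funPTI; apply: measurable_set1.
- move=> i j _ _ [w [/= hi hj]]; apply: val_inj => /=.
  by move: hi; rewrite hj => /eqP; rewrite eqr_nat eqSS => /eqP.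
rewrite (eq_bigr (fun j : 'I_K => ((1 - q) ^+ j * q)%:E)); last by move=> j _; apply: hg.
rewrite sumEFin; congr (_%:E).
have h : (1 - q) ^+ K - 1 = - q * \sum_(i < K) (1 - q) ^+ i.
  by rewrite subrX1; congr (_ * _); ring.
have -> : \sum_(i < K) (1 - q) ^+ i * q = q * \sum_(i < K) (1 - q) ^+ i.
  by rewrite big_distrr; apply: eq_bigr => i _; rewrite mulrC.
move: h; set s := \sum_(i < K) _; set x := (1 - q) ^+ K; move=> h; nra.
Qed.
Lemma mgf_bound (R : realType) (q a : R) (K : nat) : 0 < a -> a <= q -> q < 1 ->
  \sum_(j < K) ((1 - q) ^+ j * q) * expR (a / 3 * j.+1%:R) <= expR (a / 2 / q).
Proof.
move=> a0 aq q1.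
have q0 : 0 < q by apply: lt_le_trans aq.
set z := expR (a / 3).
set w := expR (- (a / 3)).
have zw : z * w = 1 by rewrite /z /w expRN divff // gt_eqF // expR_gt0.
have z0 : 0 < z by apply: expR_gt0.
have w1 : 1 - a / 3 <= w by rewrite /w; have := expR_ge1Dx (- (a / 3)); lra.
set r := (1 - q) * z.
have r0 : 0 <= r by rewrite /r mulr_ge0 //; [lra | exact: ltW].
set S := \sum_(j < K) r ^+ j.
have -> : \sum_(j < K) ((1 - q) ^+ j * q) * expR (a / 3 * j.+1%:R) = q * z * S.
  rewrite /S big_distrr /=; apply: eq_bigr => j _.
  by rewrite expRM_natr -/z /r exprS exprMn; ring.
have S0 : 0 <= S by rewrite /S sumr_ge0 // => j _; rewrite exprn_ge0.
have rK0 : 0 <= r ^+ K by rewrite exprn_ge0.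
have hS : r ^+ K - 1 = (r - 1) * S by rewrite subrX1.
set Y := q * z * S.
have Y0 : 0 <= Y by rewrite /Y !mulr_ge0 //; [exact: ltW | exact: ltW].
have hYD : Y * (w - 1 + q) <= q.
  have -> : Y * (w - 1 + q) = q * S * (z * w) - q * S * r.
    by rewrite /Y /r; ring.
  rewrite zw; nra.
have hY1 : Y * (q - a / 3) <= q.
  apply: le_trans hYD; apply: ler_wpM2l => //; lra.
have hY15 : Y <= 3 / 2 by nra.
have hq : Y * q <= q + a / 2 by nra.
apply: le_trans (expR_ge1Dx _).
have -> : 1 + a / 2 / q = (q + a / 2) / q by field; rewrite gt_eqF.
by rewrite ler_pdivlMr.
Qed.
Lemma le_lim_geo (R : realType) (x C c r : R) : 0 <= r -> r < 1 ->
  (forall K : nat, x <= C + c * r ^+ K) -> x <= C.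
Proof.
move=> r0 r1 H.
have hc : (C + c * r ^+ K) @[K --> \oo] --> (C : R).
  rewrite -[X in _ --> X]addr0; apply: cvgD; first exact: cvg_cst.
  rewrite -(mulr0 c); apply: cvgMr; apply: cvg_expr.
  by rewrite ger0_norm.
have <- : lim ((C + c * r ^+ K) @[K --> \oo]) = C by apply: cvg_lim.
apply: limr_ge; first by apply/cvg_ex; exists C.
by near=> K; apply: H.
Unshelve. all: end_near.
Qed.

Lemma PE (d : measure_display) (T : measurableType d) (R : realType)
  (P : probability T R) (n : nat) (X : 'I_n -> {RV P >-> R}) (p : 'I_n -> R)
  (hgeo : forall i, is_geometric (X i) (p i))
  (hind : mutually_independent_RV X) (k : 'I_n -> nat) :
  P (\bigcap_(i in [set: 'I_n]) X i @^-1` [set ((k i).+1%:R : R)]) =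
  (\prod_(i < n) ((1 - p i) ^+ (k i) * p i))%:E.
Proof.
rewrite hind; last by move=> i; exact: measurable_set1.
rewrite -prodEFin; apply: eq_bigr => i _; exact: hgeo.
Qed.

Theorem lemma8 (d : measure_display) (T : measurableType d) (R : realType)
  (P : probability T R) (n : nat) (X : 'I_n.+1 -> {RV P >-> R}) (p : 'I_n.+1 -> R)
  (hp0 : forall i, 0 < p i) (hp1 : forall i, p i < 1)
  (hsort : forall i j : 'I_n.+1, (i <= j)%N -> p i <= p j)
  (hgeo : forall i, is_geometric (X i) (p i))
  (hind : mutually_independent_RV X)
  (t : R) (ht : 0 <= t) :
  let mu := \sum_(i < n.+1) (p i)^-1 in
  (P [set w | (3 * (mu + t) < \sum_(i < n.+1) X i w)%R] <=
     (expR (- (p ord0 / 2) * mu - p ord0 * t)%R)%:E)%E.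
Proof.
cbv zeta; set mu := \sum_(i < n.+1) (p i)^-1.
set p0 := p ord0.
have p00 : 0 < p0 := hp0 ord0.
have p01 : p0 < 1 := hp1 ord0.
have hpi : forall i, p0 <= p i by move=> i; apply: hsort.
set a := 3 * (mu + t).
set A := [set w | a < \sum_(i < n.+1) X i w].
have mA : measurable A.
  have := measurable_sum (index_enum 'I_n.+1) (fun i => @measurable_funPT _ _ _ _ (X i))
    measurableT (measurable_itv `]a, +oo[).
  rewrite setTI; congr measurable; apply/seteqP; split => w /=;
    by rewrite in_itv /= andbT.
have mes1 : forall i c, measurable (X i @^-1` [set c]).
  by move=> i c; apply: measurable_funPTI; exact: measurable_set1.
set B := expR (- (p0 / 2) * mu - p0 * t).
suff H : forall K, (P A <= (B + (n.+1)%:R * (1 - p0) ^+ K)%:E)%E.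
  rewrite -(fineK (fin_num_measure P _ mA)) lee_fin.
  apply: (@le_lim_geo _ _ _ (n.+1)%:R (1 - p0)); [lra | lra |].
  by move=> K; rewrite -lee_fin fineK; [exact: H | exact: fin_num_measure].
move=> K.
pose G i := \big[setU/set0]_(j < K) (X i @^-1` [set (j.+1)%:R]).
have mG : forall i, measurable (G i).
  by move=> i; apply: bigsetU_measurable => j _; exact: mes1.
have PGc : forall i, P (~` G i) = ((1 - p i) ^+ K)%:E.
  move=> i; rewrite probability_setC // (PG _ _ _ _ _ _ K (hgeo i)).
  by rewrite -EFinB; congr (_%:E); ring.
pose FT := {ffun 'I_n.+1 -> 'I_K}.
pose cond (k : FT) := a < \sum_(i < n.+1) ((k i).+1%:R : R).
pose E (k : FT) := \bigcap_(i in [set: 'I_n.+1]) X i @^-1` [set ((k i).+1%:R : R)].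
pose F (k : FT) := if cond k then E k else set0.
have mE : forall k, measurable (E k).
  by move=> k; apply: fin_bigcap_measurable; [exact: finite_finset | move=> i _; exact: mes1].
have mF : forall k, measurable (F k).
  by move=> k; rewrite /F; case: ifP => _ //; exact: mE.
set U := \bigcup_(k in [set: FT]) F k.
set V := \big[setU/set0]_(i < n.+1) ~` G i.
have mU : measurable U.
  by apply: fin_bigcup_measurable; [exact: finite_finset | move=> k _; exact: mF].
have mV : measurable V.
  by apply: bigsetU_measurable => i _; apply: measurableC.
have AUV : A `<=` U `|` V.
  move=> w Aw.
  have [allG | ] := pselect (forall i, G i w).
  - left.
    have : forall i, exists j : 'I_K, X i w = (j.+1)%:R.
      move=> i; have := allG i; rewrite /G -(bigcup_mkord K (fun j => X i @^-1` [set (j.+1)%:R])) => -[j /= jK h].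
      by exists (Ordinal jK).
    move/choice => [f hf].
    exists [ffun i => f i] => //.
    have c : cond [ffun i => f i].
      rewrite /cond; have -> : \sum_(i < n.+1) ((([ffun i => f i] : FT) i).+1%:R : R) = \sum_(i < n.+1) X i w.
        by apply: eq_bigr => i _; rewrite ffunE hf.
      exact: Aw.
    rewrite /F c => i _ /=; by rewrite ffunE hf.
  - move/existsNP => [i Gi]; right.
    rewrite /V -bigcup_mkord_ord; exists (val i) => //=; by rewrite inord_val.
have PV : (P V <= ((n.+1)%:R * (1 - p0) ^+ K)%:E)%E.
  rewrite /V -bigcup_mkord_ord (bigcup_mkord n.+1 (fun m => ~` G (inord m))).
  have hB := @Boole_inequality _ _ _ P (fun m => ~` G (inord m)) n.+1 (fun m _ => measurableC (mG _)).
  apply: le_trans hB _.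
  rewrite (eq_bigr (fun i => ((1 - p i) ^+ K)%:E)); last first.
    by move=> i _; rewrite inord_val; exact: PGc.
  rewrite sumEFin lee_fin.
  have hb : forall i : 'I_n.+1, (1 - p i) ^+ K <= (1 - p0) ^+ K.
    move=> i; rewrite lerXn2r // ?nnegrE; have := hpi i; have := hp1 i; lra.
  apply: le_trans (ler_sum _ (fun i _ => hb i)) _.
  by rewrite sumr_const card_ord mulr_natl.
have PF : forall k, P (F k) = (if cond k then \prod_(i < n.+1) ((1 - p i) ^+ (k i) * p i) else 0)%:E.
  move=> k; rewrite /F; case: ifP => _; last exact: measure0.
  exact: (PE _ _ _ _ _ _ _ hgeo hind (fun i => nat_of_ord (k i))).
have PU : (P U <= B%:E)%E.
  rewrite /U measure_fin_bigcup; last 3 first.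
  - exact: finite_finset.
  - move=> k k' _ _ [w [Fk Fk']]; move: Fk Fk'; rewrite /F.
    case: ifP => _ //; case: ifP => _ // h2 h1.
    apply/ffunP => i; apply: val_inj.
    have e1 := h1 i I; have e2 := h2 i I; simpl in e1, e2.
    by move: e1; rewrite e2 => /eqP; rewrite eqr_nat eqSS => /eqP.
  - by move=> k _; exact: mF.
  rewrite (fsbigE (enum FT)); last 3 first.
  - exact: enum_uniq.
  - by [].
  - by move=> k _; rewrite mem_enum.
  rewrite (eq_bigl xpredT); last by move=> k; rewrite in_setT.
  rewrite big_enum /=.
  rewrite (eq_bigr _ (fun k _ => PF k)) sumEFin lee_fin.
  set lam := p0 / 3.
  have lam0 : 0 < lam by rewrite /lam; lra.
  have step1 : forall k : FT, (if cond k then \prod_(i < n.+1) ((1 - p i) ^+ (k i) * p i) else 0)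
     <= expR (- (lam * a)) * \prod_(i < n.+1) ((1 - p i) ^+ (k i) * p i * expR (lam * (k i).+1%:R)).
    move=> k; rewrite [X in _ <= _ * X]big_split /=.
    set Q := \prod_(i < n.+1) ((1 - p i) ^+ (k i) * p i).
    set Ee := \prod_(i < n.+1) expR (lam * (k i).+1%:R).
    have Q0 : 0 <= Q.
      apply: prodr_ge0 => i _; apply: mulr_ge0; last exact: ltW.
      by apply: exprn_ge0; have := hp1 i; lra.
    have Ee0 : 0 <= Ee by apply: prodr_ge0 => i _; exact: expR_ge0.
    case: ifP => hc.
    - have h1 : 1 <= expR (- (lam * a)) * Ee.
        rewrite /Ee -expR_sum -expRD; apply: le_trans (expR_ge1Dx _).
        rewrite -mulr_sumr; move: hc; rewrite /cond => hc; nra.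
      apply: (@le_trans _ _ (Q * (expR (- (lam * a)) * Ee))).
        by rewrite -{1}(mulr1 Q) ler_wpM2l.
      by rewrite mulrCA.
    - by apply: mulr_ge0 => //; apply: mulr_ge0 => //; exact: expR_ge0.
  apply: le_trans (ler_sum _ (fun k _ => step1 k)) _.
  rewrite -mulr_sumr.
  rewrite -(bigA_distr_bigA (fun i (j : 'I_K) => (1 - p i) ^+ j * p i * expR (lam * j.+1%:R))) /=.
  apply: (@le_trans _ _ (expR (- (lam * a)) * \prod_(i < n.+1) expR (p0 / 2 / p i))).
    apply: ler_wpM2l; first exact: expR_ge0.
    apply: ler_prod => i _; apply/andP; split.
      apply: sumr_ge0 => j _; apply: mulr_ge0; last exact: expR_ge0.
      apply: mulr_ge0; last exact: ltW.
      by apply: exprn_ge0; have := hp1 i; lra.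
    exact: (@mgf_bound _ (p i) p0 K p00 (hpi i) (hp1 i)).
  rewrite -expR_sum -expRD /B le_eqVlt; apply/orP; left; apply/eqP.
  congr (expR _); rewrite -mulr_sumr -/mu /a /lam; field.
  by [].
apply: le_trans (@le_measure _ _ _ P A (U `|` V) (mem_set mA) (mem_set (measurableU _ _ mU mV)) AUV) _.
apply: le_trans (measureU2 _ mU mV) _.
by rewrite EFinD; apply: leeD.
Qed.
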